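(* Let $X\in\sigma\mathcal F$ and $F\in\mathsf{age}(X)$. Then $\mathsf{rk}_X(F)=\infty$ if and only if Player II has a winning strategy in the rank game on $X$ starting from $F$.
   Context: Let $\mathcal L$ be a countable relational language without constants and $\mathcal F$ a hereditary, isomorphism-closed class of finite $\mathcal L$-structures. $\sigma\mathcal F$ is the class of countable structures isomorphic to unions of chains in $\mathcal F$; $\mathsf{age}(X)$ is the set of finite (induced) substructures of $X$. For $A\le B$, $B$ is a prime extension of $A$ if $|B\setminus A|=1$; a realization of $B$ in $X$ (where $A\le X$) is $C\le X$ with $A\le C$ and an isomorphism $B\to C$ fixing $A$ pointwise. For $F\in\mathsf{age}(X)$ define by recursion: $\mathsf{rk}_X(F)\ge0$ always; $\mathsf{rk}_X(F)\ge\alpha+1$ iff every prime extension $B\in\mathcal F$ of $F$ has a realization $C$ in $X$ with $\mathsf{rk}_X(C)\ge\alpha$; for limit $\alpha$, $\mathsf{rk}_X(F)\ge\alpha$ iff $\mathsf{rk}_X(F)\ge\beta$ for all $\beta<\alpha$. $\mathsf{rk}_X(F)=\sup\{\alpha:\mathsf{rk}_X(F)\ge\alpha\}$, and $\mathsf{rk}_X(F)=\infty$ if $\mathsf{rk}_X(F)\ge\alpha$ for every ordinal $\alpha$. The rank game on $X$ starting from $F$: players I and II play $\omega$ rounds; the position at round $n$ is $F_n\in\mathsf{age}(X)$ with $F_0=F$. In round $n$, I chooses a prime extension $B\in\mathcal F$ of $F_n$, and II responds with a realization $C$ of $B$ in $X$, setting $F_{n+1}=C$. II loses at round $n$ if no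 realization exists; II wins if the game lasts all $\omega$ rounds. *)

(* Defs.v *)
From mathcomp Require Import all_boot finmap.
Set Implicit Arguments.
Unset Strict Implicit.
Unset Printing Implicit Defensive.
Local Open Scope fset_scope.

Record lang := Lang { sym : countType; arity : sym -> nat }.

Definition rels (L : lang) (A : Type) :=
  forall s : sym L, ('I_(arity s) -> A) -> Prop.

Record fstruct (L : lang) := FStruct { fcar : finType; frel : rels L fcar }.
Arguments FStruct {L} fcar frel.
Arguments frel {L} f s t.

Definition is_embedding (L : lang) (A B : Type) (rA : rels L A) (rB : rels L B)
  (f : A -> B) : Prop :=
  injective f /\ forall (s : sym L) (t : 'I_(arity s) -> A), rA s t <-> rB s (f \o t).

Definition is_iso (L : lang) (A B : Type) (rA : rels L A) (rB : rels L B)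
  (f : A -> B) : Prop :=
  is_embedding rA rB f /\ forall y : B, exists x : A, f x = y.

Definition fsub (L : lang) (B : fstruct L) (P : pred (fcar B)) : fstruct L :=
  FStruct {x : fcar B | P x} (fun s t => @frel L B s (fun i => val (t i))).

Definition hereditary (L : lang) (F : fstruct L -> Prop) : Prop :=
  forall (B : fstruct L) (P : pred (fcar B)), F B -> F (fsub P).

Definition iso_closed (L : lang) (F : fstruct L -> Prop) : Prop :=
  forall (A B : fstruct L) (f : fcar A -> fcar B),
    is_iso (frel A) (frel B) f -> F A -> F B.

Section Rank.
Variables (L : lang) (F : fstruct L -> Prop).
Variables (T : countType) (X : rels L T).

(* The finite induced substructure of X on the finite subset S
   (the elements of age(X) are these substructures, i.e. finite subsets). *)
Definition sub_of (S : {fset T}) : fstruct L :=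
  FStruct S (fun s t => @X s (fun i => val (t i))).

Definition in_sigmaF : Prop :=
  exists c : nat -> {fset T},
    (forall n, c n `<=` c n.+1) /\
    (forall x : T, exists n, x \in c n) /\
    (forall n, F (sub_of (c n))).

(* A prime extension B in F of the substructure on S: a finite structure B
   in F together with an embedding of S into B (identifying S with a
   substructure of B) such that B has exactly one new element. *)
Record pext (S : {fset T}) := PExt {
  pB : fstruct L;
  pe : fcar (sub_of S) -> fcar pB;
  pe_emb : is_embedding (frel (sub_of S)) (frel pB) pe;
  pB_F : F pB;
  pB_card : #|fcar pB| = #|fcar (sub_of S)|.+1 }.

Definition realizes (S : {fset T}) (m : pext S) (C : {fset T}) : Prop :=
  S `<=` C /\
  exists f : fcar (pB m) -> fcar (sub_of C),
    is_iso (frel (pB m)) (frel (sub_of C)) f /\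
    forall x : fcar (sub_of S), val (f (pe m x)) = val x.

(* Ordinals are represented by well-ordered types. *)
Record wordered := WOrd {
  wcar : Type;
  wlt : wcar -> wcar -> Prop;
  wlt_wf : well_founded wlt;
  wlt_trans : forall x y z, wlt x y -> wlt y z -> wlt x z;
  wlt_total : forall x y, wlt x y \/ x = y \/ wlt y x }.

Definition is_pred (W : wordered) (v w : wcar W) : Prop :=
  wlt v w /\ forall u, wlt u w -> u = v \/ wlt u v.

(* rk_ge W S w  <->  rk_X(S) >= w, by recursion on w : zero / successor /
   limit, exactly as in the paper. *)
Inductive rk_ge (W : wordered) : {fset T} -> wcar W -> Prop :=
| rk_ge0 : forall S w, (forall v, ~ wlt v w) -> rk_ge S w
| rk_geS : forall S v w, is_pred v w ->
    (forall m : pext S, exists C, realizes m C /\ rk_ge C v) -> rk_ge S w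
| rk_geL : forall S w, (exists v, wlt v w) -> (forall v, ~ is_pred v w) ->
    (forall v, wlt v w -> rk_ge S v) -> rk_ge S w.

Definition rk_inf (S : {fset T}) : Prop :=
  forall (W : wordered) (w : wcar W), rk_ge S w.

(* The rank game starting from S0.  Histories ending at position P
   (the sequence of positions and of I's moves played so far). *)
Inductive hist (S0 : {fset T}) : {fset T} -> Type :=
| hist0 : hist S0 S0
| histS : forall P, hist S0 P -> pext P -> forall C : {fset T}, hist S0 C.

Definition strategyII (S0 : {fset T}) :=
  forall P (h : hist S0 P), pext P -> {fset T}.

Inductive consistent (S0 : {fset T}) (sigma : strategyII S0) :
  forall P, hist S0 P -> Prop :=
| cons0 : consistent sigma (hist0 S0)
| consS : forall P (h : hist S0 P) (m : pext P),
    consistent sigma h -> consistent sigma (histS h m (sigma P h m)).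

(* sigma is winning: along every play following sigma, II's response is
   always a realization of I's move, so II never loses and the game lasts
   omega rounds. *)
Definition winningII (S0 : {fset T}) (sigma : strategyII S0) : Prop :=
  forall P (h : hist S0 P), consistent sigma h ->
    forall m : pext P, realizes m (sigma P h m).

Definition II_wins (S0 : {fset T}) : Prop :=
  exists sigma : strategyII S0, winningII sigma.

End Rank.

(* Main.v *)
Require Import Defs.
From mathcomp Require Import all_boot finmap.
From Stdlib Require Import Classical ClassicalEpsilon Eqdep_dec.

Definition Gp (L : lang) (F : fstruct L -> Prop) (T : countType) (X : rels L T)
  (W : wordered) (S : {fset T}) (w : wcar W) : Prop :=
  forall u, wlt u w -> forall m : pext F X S, exists C, realizes m C /\ rk_ge F X C u.
Arguments Gp {L} F {T} X {W} S w.

Lemma rk_char (L : lang) (F : fstruct L -> Prop) (T : countType) (X : rels L T)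
  (W : wordered) : forall (w : wcar W) (S : {fset T}), rk_ge F X S w <-> Gp F X S w.
Proof.
intro w; induction w as [w IH] using (well_founded_ind (@wlt_wf W)).
assert (mono : forall v, wlt v w -> forall C, rk_ge F X C v -> forall u, wlt u v -> rk_ge F X C u).
{ intros v Hv C HC u Hu. apply (IH u (wlt_trans Hu Hv)).
  apply (IH v Hv) in HC. intros u' Hu' m. apply HC. exact (wlt_trans Hu' Hu). }
intro S; split.
- intro H; destruct H as [S w Hn|S v w [Hvw Hp] Hm|S w _ Hnp Hall].
  + intros u Hu; exfalso; exact (Hn u Hu).
  + intros u Hu m. destruct (Hp u Hu) as [->|Huv]; first by apply Hm.
    destruct (Hm m) as [C [HC Hr]]; exists C; split; auto. exact (mono v Hvw C Hr u Huv).
  + intros u Hu m.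
    assert (Hx : exists x, wlt x w /\ wlt u x).
    { apply NNPP; intro Hno. apply (Hnp u). split; auto. intros x Hx.
      destruct (wlt_total u x) as [Hux|[Hux|Hux]].
      - exfalso; apply Hno; exists x; auto.
      - left; auto.
      - right; auto. }
    destruct Hx as [x [Hxw Hux]].
    exact (proj1 (IH x Hxw S) (Hall x Hxw) u Hux m).
- intro HG. destruct (classic (exists v, wlt v w)) as [Hex|Hno].
  + destruct (classic (exists v, is_pred v w)) as [[v Hp]|Hnp].
    * apply (rk_geS Hp). intro m. exact (HG v (proj1 Hp) m).
    * apply rk_geL; auto.
      -- intros v Hv; apply Hnp; exists v; auto.
      -- intros v Hv. apply (IH v Hv). intros u Hu m. exact (HG u (wlt_trans Hu Hv) m).
  + apply rk_ge0. intros v Hv; apply Hno; exists v; auto.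
Qed.

Lemma rk_mono (L : lang) (F : fstruct L -> Prop) (T : countType) (X : rels L T)
  (W : wordered) (w u : wcar W) (S : {fset T}) :
  rk_ge F X S w -> wlt u w -> rk_ge F X S u.
Proof.
intros H Hu. apply rk_char. apply rk_char in H. intros u' Hu' m.
exact (H u' (wlt_trans Hu' Hu) m).
Qed.

Lemma rk_transfer (L : lang) (F : fstruct L -> Prop) (T : countType) (X : rels L T)
  (W1 W2 : wordered) (g : wcar W1 -> wcar W2)
  (Hg : forall x y, wlt x y -> wlt (g x) (g y)) :
  forall w S, rk_ge F X S (g w) -> rk_ge F X S w.
Proof.
intro w; induction w as [w IH] using (well_founded_ind (@wlt_wf W1)).
intros S H. apply rk_char. apply rk_char in H. intros u Hu m.
destruct (H (g u) (Hg _ _ Hu) m) as [C [HC Hr]]. exists C; split; auto.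
Qed.


Inductive slt (I : countType) (Wf : I -> wordered) :
  {i : I & wcar (Wf i)} -> {i : I & wcar (Wf i)} -> Prop :=
| slt1 (i j : I) x y : (choice.pickle i < choice.pickle j)%N -> slt I Wf (existT _ i x) (existT _ j y)
| slt2 (i : I) x y : wlt x y -> slt I Wf (existT _ i x) (existT _ i y).
Arguments slt {I} Wf _ _.
Arguments slt1 {I Wf i j x y}.
Arguments slt2 {I Wf i x y}.

Lemma slt_inv (I : countType) (Wf : I -> wordered) i j x y :
  slt Wf (existT _ i x) (existT _ j y) ->
  (choice.pickle i < choice.pickle j)%N \/
  (exists e : i = j, wlt (eq_rect i (fun k => wcar (Wf k)) x j e) y).
Proof.
intro H. remember (existT _ i x) as a eqn:Ha. remember (existT _ j y) as b eqn:Hb.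
destruct H as [i' j' x' y' Hl|i' x' y' Hl].
- left. have E1 := f_equal (@projT1 _ _) Ha. have E2 := f_equal (@projT1 _ _) Hb.
  simpl in E1, E2. subst. exact Hl.
- right. have E1 := f_equal (@projT1 _ _) Ha. have E2 := f_equal (@projT1 _ _) Hb.
  simpl in E1, E2. subst i' j.
  apply (inj_pair2_eq_dec _ (@eq_comparable I)) in Ha.
  apply (inj_pair2_eq_dec _ (@eq_comparable I)) in Hb. subst.
  exists erefl. exact Hl.
Qed.

Lemma slt_wf (I : countType) (Wf : I -> wordered) : well_founded (slt Wf).
Proof.
intros [i x].
move: {2}(choice.pickle i) (erefl (choice.pickle i)) => n. move: i x.
induction n as [n IHn] using ltn_ind.
intros i x Hn. induction x as [x IHx] using (well_founded_ind (@wlt_wf (Wf i))).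
constructor. intros [j y] H. apply slt_inv in H. destruct H as [H|[e H]].
- apply (IHn (choice.pickle j)); [by rewrite -Hn | reflexivity].
- subst j. simpl in H. exact (IHx y H).
Qed.

Lemma slt_trans (I : countType) (Wf : I -> wordered) a b c :
  slt Wf a b -> slt Wf b c -> slt Wf a c.
Proof.
destruct c as [k z].
intros H1. destruct H1 as [i j x y Hl|i x y Hl]; intro H2; apply slt_inv in H2;
  destruct H2 as [H2|[e H2]].
- apply slt1. exact (ltn_trans Hl H2).
- subst j. apply slt1. exact Hl.
- apply slt1. exact H2.
- subst i. simpl in H2. apply slt2. exact (wlt_trans Hl H2).
Qed.

Lemma slt_total (I : countType) (Wf : I -> wordered) a b :
  slt Wf a b \/ a = b \/ slt Wf b a.
Proof.
destruct a as [i x], b as [j y].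
case: (ltngtP (choice.pickle i) (choice.pickle j)) => H.
- left; apply slt1; exact H.
- right; right; apply slt1; exact H.
- have E : i = j by apply (pcan_inj (@choice.pickleK I)); rewrite H.
  subst j. destruct (wlt_total x y) as [Hl|[Hl|Hl]].
  + left; apply slt2; exact Hl.
  + right; left; subst; reflexivity.
  + right; right; apply slt2; exact Hl.
Qed.

Definition blt (I : countType) (Wf : I -> wordered)
  (a b : {i : I & wcar (Wf i)} + bool) : Prop :=
  match a, b with
  | inl p, inl q => slt Wf p q
  | inl _, inr _ => True
  | inr _, inl _ => False
  | inr b1, inr b2 => b1 = false /\ b2 = true
  end.
Arguments blt {I} Wf a b.
Arguments slt_wf {I} Wf.
Arguments slt_total {I} Wf a b.

Lemma blt_wf (I : countType) (Wf : I -> wordered) : well_founded (blt Wf).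
Proof.
have Hl : forall p, Acc (blt Wf) (inl p).
{ intro p. induction (@slt_wf I Wf p) as [p _ IH]. constructor.
  intros [q|b] H; [exact (IH q H) | destruct H]. }
have Hf : Acc (blt Wf) (inr false).
{ constructor. intros [q|b] H; [exact (Hl q) | by destruct H]. }
intros [p|[|]]; auto.
constructor. intros [q|b] H; [exact (Hl q) | destruct H; subst; exact Hf].
Qed.

Lemma blt_trans (I : countType) (Wf : I -> wordered) a b c :
  blt Wf a b -> blt Wf b c -> blt Wf a c.
Proof.
destruct a as [p|b1], b as [q|b2], c as [r|b3]; simpl; try tauto.
all: try apply slt_trans.
all: try (intros [_ H] [H' _]; subst; discriminate).
Qed.

Lemma blt_total (I : countType) (Wf : I -> wordered) a b :
  blt Wf a b \/ a = b \/ blt Wf b a.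
Proof.
destruct a as [p|b1], b as [q|b2]; simpl; try tauto.
- destruct (slt_total Wf p q) as [H|[H|H]]; auto. right; left; congruence.
- destruct b1, b2; auto.
Qed.

Definition Wsum (I : countType) (Wf : I -> wordered) : wordered :=
  @WOrd _ (blt Wf) (@blt_wf I Wf) (@blt_trans I Wf) (@blt_total I Wf).
Arguments Wsum {I} Wf.

Definition Wunit : wordered.
Proof.
refine (@WOrd unit (fun _ _ => False) _ _ _).
- intro x; constructor; intros y [].
- intros x y z [].
- intros [] []; auto.
Defined.

Lemma key_step (L : lang) (F : fstruct L -> Prop) (T : countType) (X : rels L T)
  (S : {fset T}) (H : rk_inf F X S) (m : pext F X S) :
  exists C, realizes m C /\ rk_inf F X C.
Proof.
apply NNPP; intro Hn.
have Hc : forall C : {fset T}, exists W : wordered, exists w : wcar W,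
    realizes m C -> ~ rk_ge F X C w.
{ intro C. destruct (classic (realizes m C)) as [HC|HC].
  - have HnC : ~ rk_inf F X C by intro HI; apply Hn; exists C; auto.
    unfold rk_inf in HnC. apply not_all_ex_not in HnC. destruct HnC as [W HW].
    apply not_all_ex_not in HW. destruct HW as [w Hw]. exists W, w; auto.
  - exists Wunit, tt; tauto. }
pose Wf := fun C => proj1_sig (constructive_indefinite_description _ (Hc C)).
have Hc' : forall C, exists w : wcar (Wf C), realizes m C -> ~ rk_ge F X C w.
{ intro C. exact (proj2_sig (constructive_indefinite_description _ (Hc C))). }
pose wf := fun C => proj1_sig (constructive_indefinite_description _ (Hc' C)).
have Hw : forall C, realizes m C -> ~ rk_ge F X C (wf C).
{ intro C. exact (proj2_sig (constructive_indefinite_description _ (Hc' C))). }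
have HS := H (Wsum Wf) (inr true).
apply rk_char in HS.
destruct (HS (inr false) (conj erefl erefl) m) as [C [HC Hr]].
apply (Hw C HC).
have Hr2 : @rk_ge L F T X (Wsum Wf) C (inl (existT _ C (wf C))).
{ eapply rk_mono; [exact Hr | exact I]. }
refine (@rk_transfer L F T X (Wf C) (Wsum Wf) (fun x => inl (existT _ C x)) _ _ _ Hr2).
intros x y Hxy. simpl. apply slt2. exact Hxy.
Qed.

Lemma resp_ex (L : lang) (F : fstruct L -> Prop) (T : countType) (X : rels L T)
  (P : {fset T}) (m : pext F X P) :
  exists C, rk_inf F X P -> realizes m C /\ rk_inf F X C.
Proof.
destruct (classic (rk_inf F X P)) as [H|H].
- destruct (@key_step L F T X P H m) as [C HC]. exists C; auto.
- exists P; tauto.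
Qed.

Theorem proposition2p6 (L : lang) (F : fstruct L -> Prop)
  (hF : hereditary F) (iF : iso_closed F)
  (T : countType) (X : rels L T) (hX : in_sigmaF F X)
  (S : {fset T}) :
  rk_inf F X S <-> II_wins F X S.
Proof.
split.
- intro H.
  pose sigma : strategyII F X S := fun P h m =>
    proj1_sig (constructive_indefinite_description _ (@resp_ex L F T X P m)).
  have Hs : forall P (h : hist F X S P) m, rk_inf F X P ->
      realizes m (sigma P h m) /\ rk_inf F X (sigma P h m).
  { intros P h m HP.
    exact (proj2_sig (constructive_indefinite_description _ (@resp_ex L F T X P m)) HP). }
  exists sigma.
  have Hinv : forall P (h : hist F X S P), consistent sigma h -> rk_inf F X P.
  { intros P h Hc. induction Hc as [|P h m Hc IH]; first exact H.
    exact (proj2 (Hs P h m IH)). }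
  intros P h Hc m. exact (proj1 (Hs P h m (Hinv P h Hc))).
- intros [sigma Hwin] W w.
  suff: forall P (h : hist F X S P), consistent sigma h -> rk_ge F X P w.
  { intro K. exact (K S (hist0 F X S) (cons0 sigma)). }
  induction w as [w IH] using (well_founded_ind (@wlt_wf W)).
  intros P h Hc. apply rk_char. intros u Hu m.
  exists (sigma P h m). split; first exact (Hwin P h Hc m).
  apply (IH u Hu _ (histS h m (sigma P h m))). apply consS. exact Hc.
Qed.
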